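(* Let $(V,\langle\cdot\,,\cdot\rangle_V)$ be a nonzero neutral scalar product space, let $P$ be an isometric involution of $V$, and assume there are two anti-isometries $T_1,T_2\colon V\to V$ such that $T_1P=-PT_1$ and $T_2P=PT_2$. Then the eigenspaces $E_+=\{v:Pv=v\}$ and $E_-=\{v:Pv=-v\}$ of $P$ are non-trivial, and the restriction of $\langle\cdot\,,\cdot\rangle_V$ to each of $E_\pm$ is non-degenerate and neutral.
   Context: A scalar product is a real symmetric non-degenerate bilinear form on a finite-dimensional real vector space; it is neutral if the maximal dimensions of subspaces on which it is positive definite, respectively negative definite, coincide. An involution is a linear $P$ with $P^2=\mathrm{Id}_V$. A bijective linear map $T$ is an isometry if $\langle Tv,Tv\rangle_V=\langle v,v\rangle_V$ for all $v$, and an anti-isometry if $\langle Tv,Tv\rangle_V=-\langle v,v\rangle_V$ for all $v$. *)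

(* Defs.v *)
From HB Require Import structures.
From mathcomp Require Import all_boot all_order all_algebra.
From mathcomp Require Import reals.
Set Implicit Arguments. Unset Strict Implicit. Unset Printing Implicit Defensive.
Import Order.TTheory GRing.Theory Num.Theory.
Local Open Scope ring_scope.

Section ScalarProducts.
Variables (R : realType) (V : vectType R).
Implicit Types (b : V -> V -> R) (U W : {vspace V}).

Definition bilinear_form b :=
  (forall a u v w, b u (a *: v + w) = a * b u v + b u w) /\
  (forall a u v w, b (a *: u + v) w = a * b u w + b v w).

Definition symmetric_form b := forall u v, b u v = b v u.

Definition nondegenerate_on b U :=
  forall u, u \in U -> (forall v, v \in U -> b u v = 0) -> u = 0.

Definition nondegenerate b := nondegenerate_on b fullv.

Definition posdef_on b W := forall v, v \in W -> v != 0 -> 0 < b v v.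
Definition negdef_on b W := forall v, v \in W -> v != 0 -> b v v < 0.

Definition neutral_on b U :=
  exists k : nat,
    [/\ (exists2 W, (W <= U)%VS & posdef_on b W /\ \dim W = k),
        (forall W, (W <= U)%VS -> posdef_on b W -> (\dim W <= k)%N),
        (exists2 W, (W <= U)%VS & negdef_on b W /\ \dim W = k) &
        (forall W, (W <= U)%VS -> negdef_on b W -> (\dim W <= k)%N)].

Definition neutral b := neutral_on b fullv.

Definition scalar_product b :=
  [/\ bilinear_form b, symmetric_form b & nondegenerate b].

Definition lin_involution (P : 'End(V)) := forall v, P (P v) = v.

Definition sp_isometry b (T : 'End(V)) :=
  bijective T /\ forall v, b (T v) (T v) = b v v.

Definition sp_anti_isometry b (T : 'End(V)) :=
  bijective T /\ forall v, b (T v) (T v) = - b v v.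

End ScalarProducts.

(* Main.v *)
Require Import Defs.
From HB Require Import structures.
From mathcomp Require Import all_boot all_order all_algebra.
From mathcomp Require Import reals.
From mathcomp Require Import lra zify.
From Stdlib Require Import Classical.
Import Order.TTheory GRing.Theory Num.Theory.
Local Open Scope ring_scope.

Lemma bD {R : realType} {V : vectType R} {b : V -> V -> R} :
  bilinear_form b -> forall u v w, b u (v + w) = b u v + b u w.
Proof. by move=> [h _] u v w; rewrite -[v in LHS]scale1r h mul1r. Qed.

Lemma b0 {R : realType} {V : vectType R} {b : V -> V -> R} :
  bilinear_form b -> forall u, b u 0 = 0.
Proof. move=> h u; have := bD h u 0 0; rewrite addr0 => /eqP; lra. Qed.

Lemma bZ {R : realType} {V : vectType R} {b : V -> V -> R} :
  bilinear_form b -> forall a u v, b u (a *: v) = a * b u v.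
Proof. move=> h a u v; have [h1 _] := h; by rewrite -[a *: v]addr0 h1 b0 // addr0. Qed.

Lemma bN {R : realType} {V : vectType R} {b : V -> V -> R} :
  bilinear_form b -> forall u v, b u (- v) = - b u v.
Proof. move=> h u v; by rewrite -scaleN1r bZ // mulN1r. Qed.

Lemma polar {R : realType} {V : vectType R} (b : V -> V -> R) (P : 'End(V)) :
  bilinear_form b -> Defs.symmetric_form b -> (forall v, b (P v) (P v) = b v v) ->
  forall u v, b (P u) (P v) = b u v.
Proof.
move=> h hs hP u v.
have e : forall x y, b (x + y) (x + y) = b x x + b y y + 2 * b x y.
  move=> x y; rewrite !bD // (hs (x+y) x) (hs (x+y) y) !bD // (hs y x); lra.
have := hP (u + v); rewrite raddfD /= e e !hP; lra.
Qed.

Lemma eigP {R : realType} {V : vectType R} (P : 'End(V)) a v :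
  (v \in passmx.leigenspace P a) = (P v == a *: v).
Proof. by rewrite memv_ker add_lfunE opp_lfunE scale_lfunE id_lfunE subr_eq0. Qed.

Lemma bounded_max (P : nat -> Prop) N : P 0%N -> (forall m, P m -> (m <= N)%N) ->
  exists n, P n /\ forall m, P m -> (m <= n)%N.
Proof.
move=> P0 HN.
suff: forall d n0, P n0 -> (N - n0 <= d)%N -> exists n, P n /\ forall m, P m -> (m <= n)%N.
  by move/(_ N 0%N P0); apply; rewrite subn0.
elim=> [|d IH] n0 Pn0 hd.
  exists n0; split=> // m Pm; have := HN _ Pm; have := HN _ Pn0; lia.
case: (classic (exists m, P m /\ (n0 < m)%N)) => [[m [Pm lt]]|nex].
  apply: (IH m Pm); have := HN _ Pm; lia.
exists n0; split=> // m Pm; case: (leqP m n0) => // lt; exfalso; apply: nex; by exists m.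
Qed.
Lemma img_props {R : realType} {V : vectType R} (U W : {vspace V}) (f : 'End(V)) :
  lker f == 0%VS -> (forall v, v \in U -> f v \in U) -> (W <= U)%VS ->
  [/\ ((f @: W) <= U)%VS, \dim (f @: W) = \dim W &
     forall v, v \in (f @: W)%VS -> v != 0 -> exists2 w, w \in W & (w != 0 /\ v = f w)].
Proof.
move=> k0 fU sWU; split.
- apply/subvP => v /memv_imgP [w wW ->]; apply: fU; exact: (subvP sWU).
- by apply: limg_dim_eq; rewrite (eqP k0) capv0.
- move=> v /memv_imgP [w wW ->] nz; exists w => //; split=> //.
  by apply: contraNneq nz => ->; rewrite linear0.
Qed.

Lemma neutral_gen {R : realType} {V : vectType R} (b : V -> V -> R) (U : {vspace V}) (f : 'End(V)) :
  lker f == 0%VS -> (forall v, v \in U -> f v \in U) ->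
  (forall v, b (f v) (f v) = - b v v) -> neutral_on b U.
Proof.
move=> k0 fU hf.
pose Q := fun n : nat => exists2 W, (W <= U)%VS & posdef_on b W /\ \dim W = n.
have Q0 : Q 0%N.
  exists 0%VS; first exact: sub0v.
  by split; [move=> v; rewrite memv0 => /eqP -> ; rewrite eqxx | exact: dimv0].
have QN : forall m, Q m -> (m <= \dim U)%N.
  by move=> m [W sW [_ <-]]; apply: dimvS.
have [k [[W0 sW0 [pW0 dW0]] Hmax]] := bounded_max _ _ Q0 QN.
exists k; split.
- by exists W0.
- by move=> W sW pW; apply: Hmax; exists W.
- have [s d h] := img_props _ _ _ k0 fU sW0; exists (f @: W0)%VS => //; split; last by rewrite d.
  move=> v vW nz; have [w wW [wnz ->]] := h v vW nz; rewrite hf.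
  by rewrite oppr_lt0; apply: pW0.
- move=> W sW nW; have [s d h] := img_props _ _ _ k0 fU sW; rewrite -d; apply: Hmax.
  exists (f @: W)%VS => //; split=> // v vW nz; have [w wW [wnz ->]] := h v vW nz.
  by rewrite hf oppr_gt0; apply: nW.
Qed.

Theorem lemma2p14 (R : realType) (V : vectType R) (b : V -> V -> R)
  (P T1 T2 : 'End(V)) :
  scalar_product b -> neutral b -> fullv != (0 : {vspace V})%VS ->
  lin_involution P -> sp_isometry b P ->
  sp_anti_isometry b T1 -> sp_anti_isometry b T2 ->
  (forall v, T1 (P v) = - P (T1 v)) ->
  (forall v, T2 (P v) = P (T2 v)) ->
  [/\ passmx.leigenspace P 1 != 0%VS, nondegenerate_on b (passmx.leigenspace P 1)
      & neutral_on b (passmx.leigenspace P 1)] /\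
  [/\ passmx.leigenspace P (-1) != 0%VS, nondegenerate_on b (passmx.leigenspace P (-1))
      & neutral_on b (passmx.leigenspace P (-1))].
Proof.
move=> [hbil hsym hnd] _ hfull hinv [_ hP] [T1bij hT1] [T2bij hT2] hc1 hc2.
have memp v : (v \in passmx.leigenspace P 1) = (P v == v) by rewrite eigP scale1r.
have memm v : (v \in passmx.leigenspace P (-1)) = (P v == - v) by rewrite eigP scaleN1r.
have orth u y : u \in passmx.leigenspace P 1 -> y \in passmx.leigenspace P (-1) -> b u y = 0.
  rewrite memp memm => /eqP Pu /eqP Py.
  have := polar b P hbil hsym hP u y; rewrite Pu Py bN //; lra.
have dp w : w + P w \in passmx.leigenspace P 1.
  by rewrite memp raddfD /= hinv addrC.
have dm w : w - P w \in passmx.leigenspace P (-1).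
  by rewrite memm raddfB /= hinv opprB.
have inj1 : injective T1 by apply: bij_inj.
have T1z v : T1 v = 0 -> v = 0.
  by move=> h; apply: inj1; rewrite h linear0.
have full0 : (forall v : V, v = 0) -> False.
  move=> h; apply: (negP hfull); rewrite -subv0; apply/subvP => v _.
  by rewrite memv0 (h v).
have k2 : lker T2 == 0%VS by apply/lker0P; apply: bij_inj.
split; split.
- apply/negP => /eqP E0; apply: full0 => v.
  have Pv : P v = - v by apply/eqP; rewrite -addr_eq0 addrC -memv0 -E0 dp.
  apply: T1z; apply/eqP; rewrite -memv0 -E0 memp.
  have := hc1 v; rewrite Pv raddfN /= => h; apply/eqP; apply: oppr_inj; by rewrite -h.
- move=> u uE H; apply: hnd; first exact: memvf.
  move=> w _; have h1 := H _ (dp w); have h2 := orth _ _ uE (dm w).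
  rewrite bD // in h1; rewrite bD // bN // in h2; lra.
- apply: (neutral_gen _ _ T2 k2) => // v; rewrite !memp -hc2 => /eqP -> //.
- apply/negP => /eqP E0; apply: full0 => v.
  have := dm v; rewrite E0 memv0 subr_eq0 => /eqP Pv.
  apply: T1z; apply/eqP; rewrite -memv0 -E0 memm.
  by rewrite {2}Pv hc1 opprK.
- move=> u uE H; apply: hnd; first exact: memvf.
  move=> w _; have h1 := H _ (dm w); have h2 := orth _ _ (dp w) uE.
  rewrite hsym in h2.
  rewrite bD // bN // in h1; rewrite bD // in h2; lra.
- apply: (neutral_gen _ _ T2 k2) => // v; rewrite !memm -hc2 => /eqP ->.
  by rewrite raddfN.
Qed.
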